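(* Let $X$ be a space and $Y$ a preopen (e.g., dense) subspace of $X$ which is an E-space. Then $Y$ is $F_{\aleph_0}$-embedded in $X$. In particular, every metrizable dense subspace of $X$ is $F_{\aleph_0}$-embedded in $X$.
   Context: ''Space'' means topological $T_0$-space. $Y$ is preopen in $X$ if $Y\subseteq\mathrm{int}_X(\mathrm{cl}_X(Y))$. A zero-set (cozero-set) of $X$ is $f^{-1}(0)$ (resp. its complement) for a continuous $f:X\to[0,1]$. A U-representation of $V\subseteq X$ is a sequence $(U_n(V))_{n\in\mathbb{N}}$ with $V=\bigcup_n U_n(V)$, $U_n(V)\subseteq U_{n+1}(V)$, $U_{2n-1}(V)$ a zero-set, $U_{2n}(V)$ a cozero-set. A family $\alpha$ is an almost subbase of $X$ if U-representations of its members can be chosen so that $\alpha\cup\{X\setminus U_{2n-1}(V):V\in\alpha,n\in\mathbb{N}\}$ is a subbase of $X$. A family is strongly point-finite if every countably infinite subfamily contains a finite subfamily with empty intersection; $\sigma$-strongly point-finite means a countable union of such families. An E-space is a space with a $\sigma$-strongly point-finite almost subbase. A family $\mathcal{U}$ F-separates $S\subseteq X$ if for distinct $x,y\in S$ some $U\in\mathcal{U}$ satisfies $x\in U$, $y\notin\mathrm{cl}_X(U)$, or vice versa. $Y$ is $F_{\aleph_0}$-embedded in $X$ if some family of open subsets of $X$ that is a countable union of point-finite families F-separates $Y$. *)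

(* Defs.v *)
From HB Require Import structures.
From mathcomp Require Import all_boot all_order all_algebra.
From mathcomp Require Import all_classical all_reals topology normedtype.
Set Implicit Arguments. Unset Strict Implicit. Unset Printing Implicit Defensive.
Import Order.TTheory GRing.Theory Num.Theory numFieldNormedType.Exports.
Local Open Scope classical_set_scope.
Local Open Scope ring_scope.

Section Defs.
Context (R : realType) (X : topologicalType).

(* "space" = T0 space *)
Definition T0_space : Prop :=
  forall x y : X, x <> y ->
    exists U : set X, open U /\ ((U x /\ ~ U y) \/ (U y /\ ~ U x)).

Definition preopen (Y : set X) : Prop := Y `<=` interior (closure Y).

Definition rel_open (Y V : set X) : Prop := exists U : set X, open U /\ V = U `&` Y.

Definition zero_set_of (Y Z : set X) : Prop :=
  exists f : X -> R, {within Y, continuous f} /\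
    (forall x, Y x -> 0 <= f x <= 1) /\ Z = Y `&` f @^-1` [set 0].

Definition cozero_set_of (Y C : set X) : Prop :=
  exists Z, zero_set_of Y Z /\ C = Y `\` Z.

(* U-representation of V (indices shifted by one: u k = U_{k+1}), so
   u (2n) = U_{2n+1} is a zero-set and u (2n+1) = U_{2n+2} a cozero-set. *)
Definition U_representation (Y V : set X) (u : nat -> set X) : Prop :=
  V = \bigcup_n u n /\ (forall n, u n `<=` u n.+1) /\
  (forall n, zero_set_of Y (u n.*2)) /\ (forall n, cozero_set_of Y (u n.*2.+1)).

(* beta is a subbase of the subspace Y: its members are open in Y and finite
   intersections of its members (the empty intersection being Y) form a base. *)
Definition subbase_of (Y : set X) (beta : set (set X)) : Prop :=
  (forall B, beta B -> rel_open Y B) /\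
  (forall W x, rel_open Y W -> W x ->
     exists s : seq (set X), (forall B, B \in s -> beta B) /\
       Y x /\ (forall B, B \in s -> B x) /\
       (forall y, Y y -> (forall B, B \in s -> B y) -> W y)).

Definition almost_subbase (Y : set X) (alpha : set (set X)) : Prop :=
  exists rep : set X -> nat -> set X,
    (forall V, alpha V -> U_representation Y V (rep V)) /\
    subbase_of Y (alpha `|` [set Y `\` rep V n.*2 | V in alpha & n in @setT nat]).

Definition strongly_point_finite (Y : set X) (F : set (set X)) : Prop :=
  forall G : set (set X), G `<=` F -> countable G -> infinite_set G ->
    exists G' : set (set X), G' `<=` G /\ finite_set G' /\
      Y `&` \bigcap_(A in G') A = set0.

Definition sigma_strongly_point_finite (Y : set X) (F : set (set X)) : Prop :=
  exists Fn : nat -> set (set X), F = \bigcup_n Fn n /\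
    forall n, strongly_point_finite Y (Fn n).

Definition E_subspace (Y : set X) : Prop :=
  exists alpha : set (set X), (forall V, alpha V -> V `<=` Y) /\
    sigma_strongly_point_finite Y alpha /\ almost_subbase Y alpha.

Definition point_finite (F : set (set X)) : Prop :=
  forall x : X, finite_set [set A | F A /\ A x].

Definition F_separates (U : set (set X)) (S : set X) : Prop :=
  forall x y, S x -> S y -> x <> y ->
    exists A, U A /\ ((A x /\ ~ closure A y) \/ (A y /\ ~ closure A x)).

Definition F_aleph0_embedded (Y : set X) : Prop :=
  exists Un : nat -> set (set X),
    (forall n A, Un n A -> open A) /\ (forall n, point_finite (Un n)) /\
    F_separates (\bigcup_n Un n) Y.

Definition metrizable_subspace (Y : set X) : Prop :=
  exists d : X -> X -> R,
    (forall x y, Y x -> Y y -> 0 <= d x y) /\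
    (forall x y, Y x -> Y y -> (d x y = 0 <-> x = y)) /\
    (forall x y, Y x -> Y y -> d x y = d y x) /\
    (forall x y z, Y x -> Y y -> Y z -> d x z <= d x y + d y z) /\
    (forall V, V `<=` Y ->
       (rel_open Y V <-> forall x, V x -> exists2 e : R, 0 < e &
          forall y, Y y -> d x y < e -> V y)).
End Defs.

(* Main.v *)
Require Import Defs.
From mathcomp Require Import all_boot all_order all_algebra.
From mathcomp Require Import all_classical all_reals topology normedtype wochoice.
From mathcomp Require Import lra.
Set Implicit Arguments. Unset Strict Implicit. Unset Printing Implicit Defensive.
Import Order.TTheory GRing.Theory Num.Theory numFieldNormedType.Exports.
Local Open Scope classical_set_scope.
Local Open Scope ring_scope.

Section Gen.
Context (R : realType) (X : topologicalType).

Lemma CL (Y : set X) (f : X -> R) (O : set R) (x : X) :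
  {within Y, continuous f} -> open O -> Y x -> O (f x) ->
  exists U : set X, open U /\ U x /\ (forall z, U z -> Y z -> O (f z)).
Proof.
move=> /subspace_continuousP fc oO Yx Ofx.
have : nbhs (f x) O by apply: open_nbhs_nbhs; split.
move=> /(fc x Yx); rewrite /= nbhs_simpl /within /=.
rewrite nbhsE => -[B [oB Bx] BS]; exists B; split => //; split => //.

Qed.
End Gen.

Section GL.
Context (X : topologicalType).

Definition Aext (Y S : set X) := (closure Y)° `&` ~` closure (Y `\` S).
Definition sep (Y S : set X) (x y : X) :=
  (exists U, open U /\ U x /\ U `&` Y `<=` S) /\
  (exists W, open W /\ W y /\ forall z, W z -> Y z -> ~ S z).

Lemma open_Aext Y S : open (Aext Y S).
Proof. apply: openI; first exact: open_interior.
by apply: closed_openC; exact: closed_closure. Qed.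

Lemma AextY Y S z : Aext Y S z -> Y z -> S z.
Proof. move=> [_ ncl] Yz; apply: contrapT => nS; apply: ncl.
by apply: subset_closure. Qed.

Lemma meetY (Y W : set X) p : open W -> W p -> W `<=` closure Y ->
  exists z, Y z /\ W z.
Proof.
move=> oW Wp WY; have /(_ W) := WY p Wp.
case; first by apply: open_nbhs_nbhs; split.
by move=> z [Yz Wz]; exists z.
Qed.

Lemma F4 (Y : set X) p (s : seq (set X)) : forall W, open W -> W p -> W `<=` closure Y ->
  (forall S, S \in s -> Aext Y S p) -> exists z, Y z /\ W z /\ forall S, S \in s -> S z.
Proof.
elim: s => [|S s IH] W oW Wp WY H.
  by have [z [Yz Wz]] := meetY oW Wp WY; exists z; split => //; split.
have := IH (W `&` Aext Y S).
case.
- by apply: openI => //; exact: open_Aext.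
- by split => //; apply: H; rewrite inE eqxx.
- by move=> z [Wz _]; apply: WY.
- by move=> S' S's; apply: H; rewrite inE S's orbT.
move=> z [Yz [[Wz AS] Hs]]; exists z; split => //; split => //.
move=> S'; rewrite inE => /orP[/eqP->|]; [exact: (AextY AS Yz) | exact: Hs].
Qed.
End GL.

Section GL2.
Context (X : topologicalType).

Lemma sepA (Y S : set X) x y : preopen Y -> Y x -> sep Y S x y ->
  Aext Y S x /\ ~ closure (Aext Y S) y.
Proof.
move=> pY Yx [[U [oU [Ux US]]] [W [oW [Wy WS]]]]; split.
  split; first exact: pY.
  move=> /(_ U); case; first by apply: open_nbhs_nbhs; split.
  by move=> z [[Yz nSz] Uz]; apply: nSz; apply: US.
move=> /(_ W); case; first by apply: open_nbhs_nbhs; split.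
move=> a [Aa Wa].
have [z [Yz [Wz Az]]] : exists z, Y z /\ (W `&` Aext Y S) z.
  apply: (meetY (p := a)); [apply: openI => //; exact: open_Aext| by split|].
  by move=> b [_ [/interior_subset]].
exact: (WS z Wz Yz (AextY Az Yz)).
Qed.

Lemma GL (Y : set X) (Sf : nat -> set (set X)) :
  preopen Y -> (forall n, strongly_point_finite Y (Sf n)) ->
  (forall x y, Y x -> Y y -> x <> y ->
     exists n S, Sf n S /\ (sep Y S x y \/ sep Y S y x)) ->
  F_aleph0_embedded Y.
Proof.
move=> pY spf Hsep.
exists (fun n => Aext Y @` Sf n); split.
  by move=> n A [S _ <-]; exact: open_Aext.
split.
  move=> n p; apply: contrapT => /infiniteP/pcard_leP/injfunPex[f fS finj].
  have fP i : (Aext Y @` Sf n) (f i) /\ f i p by apply: fS.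
  have [g Hg] : {g : nat -> set X & forall i, Sf n (g i) /\ Aext Y (g i) = f i}.
    apply: (boolp.choice (P := fun i S => Sf n S /\ Aext Y S = f i)) => i.
    by have [[S SfS <-] _] := fP i; exists S.
  have ginj : injective g.
    move=> i j gij; apply: finj; rewrite ?inE //; rewrite -(Hg i).2 -(Hg j).2 gij //.
  have := spf n (range g).
  case.
  - by move=> S [i _ <-]; exact: (Hg i).1.
  - exact: card_le_trans (card_image_le _ _) (card_leT _).
  - move=> fin; apply: infinite_nat.
    have := @finite_preimage _ _ (range g) g (fun i j _ _ => @ginj i j) fin.
    by congr finite_set; apply/seteqP; split => // i _; exists i.
  move=> G' [sG' [/finite_seqP[s Gs] emp]].
  have p0 : (closure Y)° p by have := (fP 0%N).2; rewrite -(Hg 0%N).2 => -[].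
  have H4 : forall S, S \in s -> Aext Y S p.
    move=> S Ss; have : G' S by rewrite Gs.
    move=> /sG' [i _ <-]; rewrite (Hg i).2; exact: (fP i).2.
  have [z [Yz [_ Hz]]] := @F4 _ Y p s (closure Y)° (@open_interior _ _) p0
     (@interior_subset _ _) H4.
  have : (Y `&` \bigcap_(A in G') A) z.
    split => // A; rewrite Gs /=; exact: Hz.
  by rewrite emp.
move=> x y Yx Yy nxy.
have [n [S [SfS [H|H]]]] := Hsep x y Yx Yy nxy.
  have [Ax nAy] := sepA pY Yx H.
  by exists (Aext Y S); split; [exists n => //; exists S | left].
have [Ay nAx] := sepA pY Yy H.
by exists (Aext Y S); split; [exists n => //; exists S | right].
Qed.
End GL2.

Section SPF.
Context (X : topologicalType).

Lemma spf_image (Y : set X) (F : set (set X)) (f : set X -> set X) :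
  strongly_point_finite Y F -> (forall V, F V -> f V `<=` V) ->
  strongly_point_finite Y (f @` F).
Proof.
move=> spf fsub G GF cG iG.
have [v Hv] : {v : set X -> set X & forall S, G S -> F (v S) /\ f (v S) = S}.
  apply: (boolp.choice (P := fun S V => G S -> F V /\ f V = S)) => S.
  have [GS|nGS] := pselect (G S); last by exists set0.
  by have [V FV <-] := GF S GS; exists V.
have := spf (v @` G).
case.
- by move=> V [S GS <-]; exact: (Hv S GS).1.
- exact: card_le_trans (card_image_le _ _) cG.
- move=> fin; apply: iG; apply: (sub_finite_set _ (finite_image f fin)).
  by move=> S GS; exists (v S); [exists S | exact: (Hv S GS).2].
move=> G'V [sG'V [finG'V emp]].
exists (f @` G'V); split.
  by move=> _ [V /sG'V [S GS <-] <-]; rewrite (Hv S GS).2.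
split; first exact: finite_image.
apply/seteqP; split => // z [Yz Hz]; rewrite -emp; split => // V G'VV.
have [S GS eV] := sG'V V G'VV.
apply: (fsub V); first by rewrite -eV; exact: (Hv S GS).1.
by apply: Hz; exists V.
Qed.

Lemma spf_disj (Y : set X) (F : set (set X)) :
  (forall A B, F A -> F B -> A <> B -> forall z, Y z -> A z -> B z -> False) ->
  strongly_point_finite Y F.
Proof.
move=> disj G GF cG iG.
have [A GA] := infinite_setN0 iG.
have [B [GB nBA]] : (G `\` [set A]) !=set0.
  by apply: infinite_setN0; apply: infinite_setD => //; exact: finite_set1.
exists [set A; B]; split.
  by move=> C [->|->].
split; first exact: finite_set2.
apply/seteqP; split => // z [Yz Hz].
apply: (disj A B (GF A GA) (GF B GB) _ z Yz).
- by move=> eAB; apply: nBA; rewrite eAB.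
- by apply: Hz; left.
- by apply: Hz; right.
Qed.
End SPF.

Lemma smallinv (R : realType) (r : R) : 0 < r -> exists j : nat, (j.+1%:R)^-1 < r.
Proof.
move=> r0; exists (Num.Def.trunc r^-1).
rewrite -[X in _ < X]invrK ltf_pV2 ?posrE ?invr_gt0 //; exact: truncnS_gt.
Qed.

Lemma rep_mono (X : Type) (u : nat -> set X) :
  (forall n, u n `<=` u n.+1) -> forall i j, (i <= j)%N -> u i `<=` u j.
Proof.
move=> H i j /subnK <-; elim: (j - i)%N => [|d IH] //=.
by rewrite addSn => z /IH /H.
Qed.

Section Part1.
Context (R : realType) (X : topologicalType).

Definition thr (j : nat) : R := if j is j'.+1 then (j'.+1%:R)^-1 else -1.

Lemma part1 (HX : T0_space X) (Y : set X) :
  preopen Y -> E_subspace R Y -> F_aleph0_embedded Y.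
Proof.
move=> pY [alpha [asub [[Fn [aE spfF]] [rep [Hrep [Hsub1 Hsub2]]]]]].
have [G HG] : {G : set X -> nat -> X -> R & forall V k, alpha V ->
   {within Y, continuous G V k} /\ (forall x, Y x -> 0 <= G V k x <= 1) /\
   rep V k.*2 = Y `&` G V k @^-1` [set 0]}.
  suff /boolp.choice[G' HG'] : forall V, exists g : nat -> X -> R, forall k, alpha V ->
   {within Y, continuous g k} /\ (forall x, Y x -> 0 <= g k x <= 1) /\
   rep V k.*2 = Y `&` g k @^-1` [set 0] by exists G'.
  move=> V.
  suff /boolp.choice[g Hg] : forall k, exists f : X -> R, alpha V ->
   {within Y, continuous f} /\ (forall x, Y x -> 0 <= f x <= 1) /\
   rep V k.*2 = Y `&` f @^-1` [set 0] by exists g.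
  move=> k.
  have [aV|naV] := pselect (alpha V); last by exists (fun=> 0).
  have [_ [_ [Hz _]]] := Hrep V aV.
  have [f [fc [f01 ->]]] := Hz k.
  by exists f.
have [H HH] : {H : set X -> nat -> X -> R & forall V k, alpha V ->
   {within Y, continuous H V k} /\ (forall x, Y x -> 0 <= H V k x <= 1) /\
   rep V k.*2.+1 = Y `\` (Y `&` H V k @^-1` [set 0])}.
  suff /boolp.choice[G' HG'] : forall V, exists g : nat -> X -> R, forall k, alpha V ->
   {within Y, continuous g k} /\ (forall x, Y x -> 0 <= g k x <= 1) /\
   rep V k.*2.+1 = Y `\` (Y `&` g k @^-1` [set 0]) by exists G'.
  move=> V.
  suff /boolp.choice[g Hg] : forall k, exists f : X -> R, alpha V ->
   {within Y, continuous f} /\ (forall x, Y x -> 0 <= f x <= 1) /\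
   rep V k.*2.+1 = Y `\` (Y `&` f @^-1` [set 0]) by exists g.
  move=> k.
  have [aV|naV] := pselect (alpha V); last by exists (fun=> 0).
  have [_ [_ [_ Hc]]] := Hrep V aV.
  have [Z [[f [fc [f01 ->]]] ->]] := Hc k.
  by exists f.
have aVF m V : Fn m V -> alpha V by move=> FV; rewrite aE; exists m.
have Vrep V n : alpha V -> rep V n `<=` V.
  by move=> aV z rz; have [-> _] := Hrep V aV; exists n.
have Hpos V k z : alpha V -> Y z -> (rep V k.*2.+1 z <-> 0 < H V k z).
  move=> aV Yz; have [_ [H01 ->]] := HH V k aV.
  have /andP[h0 _] := H01 z Yz; rewrite lt0r h0 andbT; split.
    by move=> [_ nz]; apply/eqP => e; apply: nz.
  by move=> /eqP nz; split => // -[_ e]; apply: nz.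
have Hzero V k z : alpha V -> Y z -> (rep V k.*2 z <-> G V k z = 0).
  move=> aV Yz; have [_ [_ ->]] := HG V k aV.
  by split => [[]|] .
have Gpos V k z : alpha V -> Y z -> ~ rep V k.*2 z -> 0 < G V k z.
  move=> aV Yz nr; have [_ [G01 _]] := HG V k aV.
  have /andP[g0 _] := G01 z Yz; rewrite lt0r g0 andbT; apply/eqP => e.
  by apply: nr; apply/(Hzero V k z aV Yz).
have mono V i j : alpha V -> (i <= j)%N -> rep V i `<=` rep V j.
  by move=> aV; apply: rep_mono; have [_ [? _]] := Hrep V aV.
pose Sset V k k2 j := Y `&` [set z | 0 < H V k z] `&` [set z | thr j < G V k2 z].
pose Sf i := if (unpickle i : option (nat * nat * nat * nat)) is Some (m, k, k2, j)
  then (fun V => Sset V k k2 j) @` Fn m else set0.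
have SfP m V k k2 j : Fn m V -> Sf (pickle (m, k, k2, j)) (Sset V k k2 j).
  by move=> FV; rewrite /Sf pickleK; exists V.
apply: (@GL _ Y Sf pY).
  move=> i; rewrite /Sf; case: (unpickle i) => [[[[m k] k2] j]|].
    apply: (spf_image (f := fun V => Sset V k k2 j) (spfF m)) => V FV z [[Yz Hz] _].
    have aV := aVF m V FV.
    by apply: (Vrep V k.*2.+1 aV); apply/(Hpos V k z aV Yz).
  move=> G' sub _ inf; exfalso; apply: inf.
  by apply: sub_finite_set sub _; exact: finite_set0.
have Fof V : alpha V -> exists2 m, True & Fn m V.
  by rewrite aE => -[m _ FV]; exists m.
have G01 V k z : alpha V -> Y z -> 0 <= G V k z <= 1.
  by move=> aV; have [_ [G01 _]] := HG V k aV; exact: G01.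
have case1 V a b : alpha V -> V a -> Y b -> ~ V b ->
    exists n S, Sf n S /\ sep Y S a b.
  move=> aV Va Yb nVb.
  have Ya : Y a := asub V aV a Va.
  have [Vd _] := Hrep V aV; move: (Va); rewrite Vd => -[j _ rj].
  have rj' : rep V j.*2.+1 a.
    by apply: (mono V j j.*2.+1 aV) rj; rewrite -addnn; apply: leqW; apply: leq_addr.
  have Ha : 0 < H V j a := (Hpos V j a aV Ya).1 rj'.
  have [m _ FV] := Fof V aV.
  exists (pickle (m, j, 0%N, 0%N)), (Sset V j 0%N 0%N); split; first exact: SfP.
  split.
    have [U [oU [Ua HU]]] := CL (O := [set r | 0 < r]) (HH V j aV).1 (@open_gt _ 0) Ya Ha.
    exists U; split => //; split => // z [Uz Yz]; split; first by split => //; exact: HU.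
    have /andP[g0 _] := G01 V 0%N z aV Yz.
    by rewrite /= /thr; apply: (lt_le_trans _ g0); rewrite oppr_lt0 ltr01.
  have nrb : ~ rep V j.+1.*2 b by move=> rb; apply: nVb; exact: (Vrep V _ aV b rb).
  have Gb := Gpos V j.+1 b aV Yb nrb.
  have [W [oW [Wb HW]]] := CL (O := [set r | 0 < r]) (HG V j.+1 aV).1 (@open_gt _ 0) Yb Gb.
  exists W; split => //; split => // z Wz Yz [[_ Hz] _].
  have : rep V j.+1.*2 z.
    apply: (mono V j.*2.+1 j.+1.*2 aV); first by rewrite doubleS.
    exact/(Hpos V j z aV Yz).
  move=> /(Hzero V j.+1 z aV Yz) e.
  by have := HW z Wz Yz; rewrite /= e ltxx.
have case2 V n a b : alpha V -> V a -> ~ rep V n.*2 a -> Y b -> rep V n.*2 b ->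
    exists n S, Sf n S /\ sep Y S a b.
  move=> aV Va nra Yb rb.
  have Ya : Y a := asub V aV a Va.
  have [Vd _] := Hrep V aV; move: (Va); rewrite Vd => -[j _ rj].
  have rj' : rep V j.*2.+1 a.
    by apply: (mono V j j.*2.+1 aV) rj; rewrite -addnn; apply: leqW; apply: leq_addr.
  have Ha : 0 < H V j a := (Hpos V j a aV Ya).1 rj'.
  have Ga := Gpos V n a aV Ya nra.
  have [j' Hj'] := smallinv Ga.
  have [m _ FV] := Fof V aV.
  exists (pickle (m, j, n, j'.+1)), (Sset V j n j'.+1); split; first exact: SfP.
  split.
    have [U1 [oU1 [U1a HU1]]] := CL (O := [set r | 0 < r]) (HH V j aV).1 (@open_gt _ 0) Ya Ha.
    have [U2 [oU2 [U2a HU2]]] := CL (O := [set r | thr j'.+1 < r]) (HG V n aV).1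
       (@open_gt _ _) Ya Hj'.
    exists (U1 `&` U2); split; first exact: openI.
    split => // z [[U1z U2z] Yz]; split; first by split => //; exact: HU1.
    exact: HU2.
  have Gb : G V n b = 0 := (Hzero V n b aV Yb).1 rb.
  have tpos : G V n b < thr j'.+1 by rewrite Gb /thr invr_gt0 ltr0n.
  have [W [oW [Wb HW]]] := CL (O := [set r | r < thr j'.+1]) (HG V n aV).1
     (@open_lt _ _) Yb tpos.
  exists W; split => //; split => // z Wz Yz [_ Gz].
  by have := HW z Wz Yz; rewrite /= ltNge (ltW Gz).
have half a b : Y a -> Y b -> forall U, open U -> U a -> ~ U b ->
    exists n S, Sf n S /\ (sep Y S a b \/ sep Y S b a).
  move=> Ya Yb U oU Ua nUb.
  have [s [sA [_ [sa sb]]]] := Hsub2 (U `&` Y) a (ex_intro _ U (conj oU erefl)) (conj Ua Ya).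
  have [B Bs nBb] : exists2 B, B \in s & ~ B b.
    apply: contrapT => nex; apply: nUb.
    suff : (U `&` Y) b by case.
    apply: (sb b Yb) => B Bs; apply: contrapT => nB; by apply: nex; exists B.
  case: (sA B Bs) => [aB | [V aV [n _ eB]]].
    have [n [S [SfS Hs]]] := case1 B a b aB (sa B Bs) Yb nBb.
    by exists n, S; split => //; left.
  have aB := sa B Bs; move: aB nBb; rewrite -eB => aB nBb.
  have rb : rep V n.*2 b by apply: contrapT => nr; apply: nBb.
  have Vb : V b := Vrep V _ aV b rb.
  have [Va|nVa] := pselect (V a).
    have [n' [S [SfS Hs]]] := case2 V n a b aV Va aB.2 Yb rb.
    by exists n', S; split => //; left.
  have [n' [S [SfS Hs]]] := case1 V b a aV Vb Ya nVa.
  by exists n', S; split => //; right.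
move=> x y Yx Yy nxy.
have [U [oU [[Ux nUy]|[Uy nUx]]]] := HX x y nxy; first exact: (half x y Yx Yy U oU Ux nUy).
have [n [S [SfS H']]] := half y x Yy Yx U oU Uy nUx.
by exists n, S; split => //; case: H'; [right|left].
Qed.
End Part1.

Lemma dense_preopen (X : topologicalType) (Y : set X) : dense Y -> preopen Y.
Proof.
move=> dY x _; suff -> : closure Y = setT by rewrite interiorT.
apply/seteqP; split => // p _ B; rewrite nbhsE => -[O [oO Op] OB].
have [z [Oz Yz]] := dY O (ex_intro _ p Op) oO.
by exists z; split => //; apply: OB.
Qed.

Section Metric.
Context (R : realType) (X : topologicalType) (Y : set X) (d : X -> X -> R) (Rw : rel X).

Definition rr (m : nat) : R := (m.+1%:R)^-1.
Definition first m c x := Y c /\ d c x < rr m /\ forall c', Y c' -> d c' x < rr m -> Rw c c'.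
Definition Dof m (C : set X) n c := [set z | exists x, [/\ Y x, first m c x, ~ C x,
  (forall w, Y w -> d x w < 3 * rr n -> d c w < rr m) & (Y z /\ d x z < rr n)]].
Fixpoint cov m n : set X :=
  if n is n'.+1 then cov m n' `|` \bigcup_(c in Y) Dof m (cov m n') n' c else set0.
Definition D m n c := Dof m (cov m n) n c.

Lemma rr_gt0 m : 0 < rr m.
Proof. by rewrite /rr invr_gt0 ltr0n. Qed.

Lemma cov_D m n z : cov m n z -> exists j c, (j < n)%N /\ Y c /\ D m j c z.
Proof.
elim: n => [//|n IH] /= [/IH [j [c [jn Hc]]]|[c Yc Dc]].
  by exists j, c; split => //; apply: ltnW.
by exists n, c.
Qed.

Hypothesis dsym : forall x y, Y x -> Y y -> d x y = d y x.
Hypothesis dtri : forall x y z, Y x -> Y y -> Y z -> d x z <= d x y + d y z.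
Hypothesis d0 : forall x, Y x -> d x x = 0.

Lemma D_sub m n c z : D m n c z -> [/\ Y z, Y c & d c z < rr m].
Proof.
move=> [x [Yx [Yc [_ _]] _ Hw [Yz dxz]]]; split => //; apply: Hw => //.
by apply: lt_le_trans dxz _; rewrite ler_peMl ?(ltW (rr_gt0 _)) // ler1n.
Qed.

Lemma D_open m n c z : D m n c z ->
  exists2 e : R, 0 < e & forall w, Y w -> d z w < e -> D m n c w.
Proof.
move=> [x [Yx fx nC Hw [Yz dxz]]]; exists (rr n - d x z); first by rewrite subr_gt0.
move=> w Yw dzw; exists x; split => //; split => //.
by apply: le_lt_trans (dtri Yx Yz Yw) _; rewrite -ltrBrDl.
Qed.

Lemma D_disj m n c c' z : antisymmetric Rw -> D m n c z -> D m n c' z -> c = c'.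
Proof.
move=> anti [x [Yx [Yc [_ fx]] _ Hw [Yz dxz]]] [x' [Yx' [Yc' [_ fx']] _ Hw' [_ dx'z]]].
have dxx' : d x x' < 3 * rr n.
  apply: le_lt_trans (dtri Yx Yz Yx') _; rewrite (dsym Yz Yx').
  have : d x z + d x' z < rr n + rr n by apply: ltrD.
  move=> /lt_le_trans; apply; have := rr_gt0 n; lra.
have dx'x : d x' x < 3 * rr n by rewrite dsym.
apply: anti; apply/andP; split.
  by apply: (fx c') => //; apply: Hw'.
by apply: (fx' c) => //; apply: Hw.
Qed.
Hypothesis least : forall m x, Y x -> exists c, first m c x.

Lemma cover m x : Y x -> exists n c, Y c /\ D m n c x.
Proof.
move=> Yx; have [c0 [Yc0 [dc0 fc0]]] := least m Yx.
have e0 : 0 < (rr m - d c0 x) / 3 by rewrite divr_gt0 ?subr_gt0.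
have [n Hn] := smallinv e0.
have [/cov_D [j [c [_ [Yc Dc]]]]|ncov] := pselect (cov m n x).
  by exists j, c.
exists n, c0; split => //; exists x; split => //.
- move=> w Yw dxw; apply: le_lt_trans (dtri Yc0 Yx Yw) _.
  rewrite /rr in dxw; set t := (n.+1%:R)^-1 in Hn dxw; move: Hn dxw; lra.
- by split => //; rewrite d0 // rr_gt0.
Qed.
End Metric.

Lemma part2 (R : realType) (X : topologicalType) (Y : set X) :
  dense Y -> metrizable_subspace R Y -> F_aleph0_embedded Y.
Proof.
move=> dY [d [dpos [dE [dsym [dtri dopen]]]]].
have [Rw wo] := well_ordering_principle X.
have refl a : Rw a a.
  have [z [[za lbz] _]] := wo (pred1 a) (ex_intro _ a (eqxx a)).
  by move: za lbz; rewrite inE => /eqP -> /(_ a); apply; rewrite inE.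
have anti : antisymmetric Rw.
  move=> a b /andP[ab ba].
  pose A : {pred X} := [pred c | (c == a) || (c == b)].
  have aA : a \in A by rewrite inE eqxx.
  have [z [_ uniq]] := wo A (ex_intro _ a aA).
  have <- : z = a.
    apply: uniq; split; first by rewrite inE eqxx.
    by move=> c; rewrite inE => /orP[] /eqP ->.
  apply: uniq; split; first by rewrite inE eqxx orbT.
  by move=> c; rewrite inE => /orP[] /eqP ->.
have d0 x : Y x -> d x x = 0 by move=> Yx; apply/(dE x x Yx Yx).
have least m x : Y x -> exists c, first Y d Rw m c x.
  move=> Yx; pose A : {pred X} := [pred c | `[< Y c /\ d c x < rr R m >]].
  have xA : x \in A by rewrite inE /=; split => //; rewrite d0 // rr_gt0.
  have [z [[zA lbz] _]] := wo A (ex_intro _ x xA).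
  move: zA; rewrite inE /= => -[Yz dz]; exists z; split => //; split => //.
  by move=> c' Yc' dc'; apply: lbz; rewrite inE /=.
pose Sf i := if (unpickle i : option (nat * nat)) is Some (m, n)
  then [set D Y d Rw m n c | c in Y] else set0.
apply: (@GL _ Y Sf (dense_preopen dY)).
  move=> i; rewrite /Sf; case: (unpickle i) => [[m n]|].
    apply: spf_disj => _ _ [c Yc <-] [c' Yc' <-] nAB z Yz Az Bz.
    by apply: nAB; rewrite (D_disj dsym dtri anti Az Bz).
  move=> G' sub _ inf; exfalso; apply: inf.
  by apply: sub_finite_set sub _; exact: finite_set0.
move=> x y Yx Yy nxy.
have dxy : 0 < d x y.
  rewrite lt0r dpos // andbT; apply/eqP => e; apply: nxy.
  exact/(dE x y Yx Yy).
have e0 : 0 < d x y / 3 by rewrite divr_gt0.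
have [m Hm] := smallinv e0.
have [n [c [Yc Dc]]] := cover dtri d0 least m Yx.
exists (pickle (m, n)), (D Y d Rw m n c); split.
  by rewrite /Sf pickleK; exists c.
left; split.
  have : rel_open Y (D Y d Rw m n c).
    apply/dopen; first by move=> z /D_sub[].
    by move=> z Dz; apply: (D_open dtri Dz).
  move=> [U [oU eU]]; exists U; split => //; split; first by move: Dc; rewrite eU => -[].
  by rewrite eU.
pose V0 := [set w | Y w /\ d y w < rr R m].
have : rel_open Y V0.
  apply/dopen; first by move=> z [].
  move=> w [Yw dyw]; exists (rr R m - d y w); first by rewrite subr_gt0.
  move=> w' Yw' dww'; split => //.
  apply: le_lt_trans (dtri _ _ _ Yy Yw Yw') _; rewrite -ltrBrDl //.
move=> [W [oW eW]]; exists W; split => //; split.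
  have : V0 y by split => //; rewrite d0 // rr_gt0.
  by rewrite eW => -[].
move=> z Wz Yz Dz.
have [_ _ dcz] := D_sub Dz.
have [_ _ dcx] := D_sub Dc.
have [_ dyz] : V0 z by rewrite eW.
have h1 := dtri _ _ _ Yx Yc Yy.
have h2 := dtri _ _ _ Yc Yz Yy.
rewrite (dsym _ _ Yx Yc) in h1; rewrite (dsym _ _ Yz Yy) in h2.
move: Hm dcz dcx dyz h1 h2; rewrite /rr; set t := (m.+1%:R)^-1; lra.
Qed.

Unset Implicit Arguments.
Theorem corollary4p9 (R : realType) (X : topologicalType) (HX : T0_space X) :
  (forall Y : set X, preopen Y -> E_subspace R Y -> F_aleph0_embedded Y) /\
  (forall Y : set X, dense Y -> metrizable_subspace R Y -> F_aleph0_embedded Y).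
Proof.
split.
  by move=> Y pY EY; exact: (part1 HX pY EY).
by move=> Y dY mY; exact: (part2 dY mY).
Qed.
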